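(* For an odd integer $n$ and any integer $1\leq k\leq\frac12(n-3)$, with $q=uv$, $$\sum_{1\leq i\leq\frac12(n-1)}e_{2i}\,g_{n-2i,n}\prod_{j=k-i+1}^{\frac12(n-1)-i}\frac{q^{2j}-1}{q^{2j-2k+2i}-1}=\frac{q^{nk}-1}{q-1}\prod_{j=k+1}^{\frac12(n-1)}\frac{q^{2j}-1}{q^{2j-2k}-1}.$$
   Context: $e_{2i}=e_{2i}(u,v)$ is the Hodge–Deligne polynomial of the variety of nondegenerate skew forms on $\mathbb{C}^{2i}$ up to scaling; $g_{m,n}=g_{m,n}(u,v)$ is the Hodge–Deligne polynomial of the Grassmannian $G(m,n)$. Empty products equal $1$. *)

(* Defs.v *)
From HB Require Import structures.
From mathcomp Require Import all_boot all_order all_algebra.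
Set Implicit Arguments. Unset Strict Implicit. Unset Printing Implicit Defensive.
Import Order.TTheory GRing.Theory Num.Theory.
Local Open Scope ring_scope.

(* Field of rational functions Q(q); q is the variable, standing for q = uv. *)
Definition Kq := {fraction {poly rat}}.
Definition qv : Kq := tofrac ('X : {poly rat}).

Definition zprod (R : comNzRingType) (a b : int) (F : int -> R) : R :=
  if (a <= b)%R then \prod_(t < absz (b - a + 1)%R) F (a + (t : nat)%:Z)%R else 1.

(* Hodge-Deligne polynomial (in q = uv) of the Grassmannian G(m,n):
   the Gaussian binomial [n choose m]_q. *)
Definition gHD (F : fieldType) (q : F) (m n : nat) : F :=
  \prod_(j < m) ((q ^+ (n - j) - 1) / (q ^+ j.+1 - 1)).

(* Hodge-Deligne polynomial (in q = uv) of the variety of nondegenerate skew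
   forms on C^(2i) up to scaling:  |GL_2i| / |Sp_2i| / (q - 1)
   = q^(i(i-1)) prod_(j=1..i) (q^(2j-1) - 1) / (q - 1). *)
Definition eHD (F : fieldType) (q : F) (i : nat) : F :=
  q ^+ (i * (i - 1)) * (\prod_(1 <= j < i.+1) (q ^+ (2 * j - 1) - 1)) / (q - 1).

(* Main.v *)
Require Import Defs.
From HB Require Import structures.
From mathcomp Require Import all_boot all_order all_algebra.
From mathcomp Require Import zify ring.
Set Implicit Arguments. Unset Strict Implicit. Unset Printing Implicit Defensive.
Import Order.TTheory GRing.Theory Num.Theory.
Local Open Scope ring_scope.

Definition SS (F : fieldType) (q : F) (s a r : nat) : F :=
  \prod_(t < r) (q ^+ (a + s * t) - 1).

Fixpoint gb (F : fieldType) (q : F) (k i : nat) : F :=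
  match k, i with
  | 0, 0 => 1
  | 0, _.+1 => 0
  | k'.+1, 0 => 1
  | k'.+1, i'.+1 => gb q k' i' + q ^+ (2 * i'.+1) * gb q k' i'.+1
  end.

Definition pp (F : fieldType) (q x : F) (i : nat) : F :=
  \prod_(l < i) (x - q ^+ (2 * l)).

Lemma SS_split (F : fieldType) (q : F) s a r1 r2 :
  SS q s a (r1 + r2) = SS q s a r1 * SS q s (a + s * r1) r2.
Proof.
rewrite /SS big_split_ord /=; congr (_ * _); apply: eq_bigr => t _ /=.
by rewrite mulnDr addnA.
Qed.

Lemma SS1 (F : fieldType) (q : F) s a : SS q s a 1 = q ^+ a - 1.
Proof. by rewrite /SS big_ord1 muln0 addn0. Qed.

Lemma SS0 (F : fieldType) (q : F) s a : SS q s a 0 = 1.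
Proof. by rewrite /SS big_ord0. Qed.

Lemma SS_inter (F : fieldType) (q : F) a r :
  SS q 1 a (2 * r) = SS q 2 a r * SS q 2 a.+1 r.
Proof.
elim: r => [|r IH]; first by rewrite muln0 !SS0 mulr1.
rewrite mulnS addnC SS_split IH -(addn1 r) !SS_split !SS1.
have -> : SS q 1 (a + 1 * (2 * r)) 2 = (q ^+ (a + 2 * r) - 1) * (q ^+ (a.+1 + 2 * r) - 1).
  rewrite /SS big_ord_recr big_ord1 /=.
  have -> : (a + 1 * (2 * r) + 1 * 0 = a + 2 * r)%N by lia.
  by have -> : (a + 1 * (2 * r) + 1 * 1 = a.+1 + 2 * r)%N by lia.
ring.
Qed.

Lemma SS_neq0 (F : fieldType) (q : F) (hq : forall j, (0 < j)%N -> q ^+ j != 1) s a r :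
  (0 < a)%N -> SS q s a r != 0.
Proof.
move=> ha; apply/prodf_neq0 => t _; rewrite subr_eq0; apply: hq; lia.
Qed.

Lemma gb0 (F : fieldType) (q : F) k : gb q k 0 = 1.
Proof. by case: k. Qed.

Lemma gb_gt (F : fieldType) (q : F) k i : (k < i)%N -> gb q k i = 0.
Proof.
elim: k i => [|k IH] [|i] //= h.
by rewrite !IH ?mulr0 ?addr0 //; lia.
Qed.

Lemma pp0 (F : fieldType) (q x : F) : pp q x 0 = 1.
Proof. by rewrite /pp big_ord0. Qed.

Lemma newton (F : fieldType) (q x : F) k :
  \sum_(i < k.+1) gb q k i * pp q x i = x ^+ k.
Proof.
elim: k => [|k IH]; first by rewrite big_ord1 /pp big_ord0 mulr1.
rewrite exprS -IH mulr_sumr.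
have e : forall i, x * (gb q k i * pp q x i) =
   gb q k i * pp q x i.+1 + q ^+ (2 * i) * gb q k i * pp q x i.
  by move=> i; rewrite /pp big_ord_recr /=; ring.
under [RHS]eq_bigr => i _ do rewrite e.
rewrite big_split /=.
rewrite big_ord_recl /= ?gb0 pp0.
have -> : \sum_(i < k.+1) gb q k.+1 (bump 0 i) * pp q x (bump 0 i) =
  \sum_(i < k.+1) gb q k i * pp q x i.+1 +
  \sum_(i < k.+1) q ^+ (2 * i.+1) * gb q k i.+1 * pp q x i.+1.
  by rewrite -big_split /=; apply: eq_bigr => i _; rewrite /bump /=; ring.
rewrite [X in _ = _ + X](big_ord_recl k) /= ?gb0 ?muln0 ?expr0 pp0.
rewrite [X in _ + (_ + X) = _]big_ord_recr /= gb_gt // mulr0 mul0r addr0.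
rewrite !mul1r addrCA; congr (_ + _); congr (_ + _).

Qed.

Lemma RS (F : fieldType) (q : F) r : SS q 2 2 r.+1 = SS q 2 2 r * (q ^+ (2 + 2 * r) - 1).
Proof. by rewrite -(addn1 r) SS_split SS1. Qed.

Lemma gbR (F : fieldType) (q : F) k i : (i <= k)%N ->
  gb q k i * SS q 2 2 i * SS q 2 2 (k - i) = SS q 2 2 k.
Proof.
elim: k i => [|k IH] [|i] //= hik.
all: try by rewrite ?SS0 ?subn0 ?mul1r ?mulr1.
rewrite subSS RS.
  case: (ltngtP i k) => hk; last first.
  + subst i; rewrite (@gb_gt _ _ k k.+1) // mulr0 addr0 subnn SS0 mulr1 RS.
    have := IH k (leqnn k); rewrite subnn SS0 mulr1 => h.
    rewrite mulrA h; congr (_ * (_ ^+ _ - _)); lia.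
  + lia.
  + have [d hd] : exists d, k = (i + d.+1)%N by exists (k - i.+1)%N; lia.
    have h1 := IH i (ltnW hk); have h2 := IH i.+1 hk.
    have -> : (k - i = d.+1)%N by lia.
    have e2 : (k - i.+1 = d)%N by lia.
    rewrite e2 in h2; rewrite (_ : (k - i)%N = d.+1) ?RS in h1; last by lia.
    rewrite RS in h2.
    have -> : SS q 2 2 k.+1 = SS q 2 2 k * (q ^+ (2 + 2 * k) - 1) by rewrite RS.
    have -> : (2 + 2 * k = (2 + 2 * i) + (2 + 2 * d))%N by lia.
    have -> : (2 * i.+1 = 2 + 2 * i)%N by lia.
    rewrite (exprD q (2 + 2 * i)) RS.
    transitivity ((q ^+ (2 + 2 * i) - 1) * (gb q k i * SS q 2 2 i * (SS q 2 2 d * (q ^+ (2 + 2 * d) - 1)))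
      + q ^+ (2 + 2 * i) * (q ^+ (2 + 2 * d) - 1) * (gb q k i.+1 * (SS q 2 2 i * (q ^+ (2 + 2 * i) - 1)) * SS q 2 2 d)).
      move: (q ^+ (2 + 2 * i)) (q ^+ (2 + 2 * d)) => A B; ring.
    rewrite h1 h2.
    move: (q ^+ (2 + 2 * i)) (q ^+ (2 + 2 * d)) => A B; ring.
Qed.

Lemma pp_eq (F : fieldType) (q : F) i a :
  pp q (q ^+ (2 * i + a)) i = q ^+ (i * (i - 1)) * SS q 2 (a + 2) i.
Proof.
elim: i a => [|i IH] a; first by rewrite pp0 SS0 mulr1 expr0.
rewrite /pp big_ord_recr /= -/(pp _ _ _).
have -> : (2 * i.+1 + a = 2 * i + (a + 2))%N by lia.
rewrite IH -(add1n i) SS_split SS1.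
have -> : (a + 2 + 2 * 1 = a + 2 + 2)%N by lia.
have -> : ((1 + i) * (1 + i - 1) = i * (i - 1) + 2 * i)%N.
  case: i {IH} => [|i] //; rewrite add1n subn1 /= subn1 /=; lia.
rewrite (exprD q (2 * i)) (exprD q (i * (i - 1))).
move: (q ^+ (i * (i - 1))) (q ^+ (2 * i)) (q ^+ (a + 2)) (SS q 2 (a + 2 + 2) i) => A B C D; ring.
Qed.

Lemma SSa (F : fieldType) (q : F) s a a' r : a = a' -> SS q s a r = SS q s a' r.
Proof. by move=> ->. Qed.

Lemma term_eq (F : fieldType) (q : F) (hq : forall j, (0 < j)%N -> q ^+ j != 1) m k i :
  (1 <= i)%N -> (i <= k)%N -> (k < m)%N ->
  eHD q i * gHD q (m.*2.+1 - i.*2) m.*2.+1 *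
  zprod (k%:Z - i%:Z + 1) (m%:Z - i%:Z)
     (fun j : int => (q ^ (2 * j) - 1) / (q ^ (2 * j - 2 * k%:Z + 2 * i%:Z) - 1))
  = SS q 2 (2 + 2 * k) (m - k) / (SS q 2 2 (m - k) * (q - 1)) *
    (gb q k i * pp q (q ^+ (m.*2.+1)) i).
Proof.
move=> h1i hik hkm.
have [b hb] : exists b, k = (i + b)%N by exists (k - i)%N; lia.
have [c hc] : exists c, m = (i + b + c)%N by exists (m - k)%N; lia.
have emk : (m - k = c)%N by lia.
rewrite emk.
have eZ : zprod (k%:Z - i%:Z + 1) (m%:Z - i%:Z)
     (fun j : int => (q ^ (2 * j) - 1) / (q ^ (2 * j - 2 * k%:Z + 2 * i%:Z) - 1))
     = SS q 2 (2 + 2 * b) c / SS q 2 2 c.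
  rewrite /zprod ifT; last by lia.
  have -> : (m%:Z - i%:Z - (k%:Z - i%:Z + 1) + 1)%R = c%:Z by lia.
  rewrite /SS -prodf_div; apply: eq_bigr => t _ /=.
  have -> : (2 * (k%:Z - i%:Z + 1 + t%:Z))%R = (2 + 2 * b + 2 * t)%N%:Z by lia.
  have -> : ((2 + 2 * b + 2 * t)%N%:Z - 2 * k%:Z + 2 * i%:Z)%R = (2 + 2 * t)%N%:Z by lia.
  by [].
rewrite eZ.
have eE : eHD q i = q ^+ (i * (i - 1)) * SS q 2 1 i / (q - 1).
  rewrite /eHD big_add1 /= big_mkord /SS; congr (_ * _ * _); apply: eq_bigr => t _.
  by congr (_ ^+ _ - _); lia.
rewrite eE.
have eN : (m.*2.+1 - i.*2 = 1 + 2 * (b + c))%N by lia.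
have eG1 : \prod_(j < 1 + 2 * (b + c)) (q ^+ (m.*2.+1 - j) - 1) = SS q 1 (1 + 2 * i) (1 + 2 * (b + c)).
  rewrite (reindex_inj rev_ord_inj) /SS; apply: eq_bigr => t _ /=.
  move: (ltn_ord t) => ht; congr (_ ^+ _ - _); lia.
have eG2 : \prod_(j < 1 + 2 * (b + c)) (q ^+ j.+1 - 1) = SS q 1 1 (1 + 2 * (b + c)).
  by rewrite /SS; apply: eq_bigr => t _; congr (_ ^+ _ - _); lia.
have eG : gHD q (m.*2.+1 - i.*2) m.*2.+1 =
   SS q 1 (1 + 2 * i) (1 + 2 * (b + c)) / SS q 1 1 (1 + 2 * (b + c)).
  by rewrite /gHD prodf_div eN eG1 eG2.
rewrite eG.
set O := SS q 2 1 i; set Ri := SS q 2 2 i; set Rb := SS q 2 2 b; set Rc := SS q 2 2 c.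
set U := SS q 2 (2 + 2 * b) c; set W := SS q 2 3 (b + c); set Y := SS q 2 (3 + 2 * (b + c)) i.
set X := SS q 2 (2 + 2 * b) i; set V := SS q 2 (2 + 2 * k) c.
have eRk : SS q 2 2 k = Rb * X by rewrite hb addnC SS_split.
have eRm : SS q 2 2 m = SS q 2 2 k * V by rewrite hc -hb SS_split.
have eSm : SS q 2 3 m = W * Y.
  have -> : m = (b + c + i)%N by lia.
  rewrite SS_split /W /Y; congr (_ * SS _ _ _ _); lia.
have eP2i : SS q 1 1 (2 * i) = O * Ri by rewrite SS_inter.
have ePn : SS q 1 1 (2 * i + (1 + 2 * (b + c))) = (q - 1) * SS q 2 2 m * SS q 2 3 m.
  rewrite (_ : 2 * i + (1 + 2 * (b + c)) = 1 + 2 * m)%N; last by lia.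
  by rewrite SS_split SS1 (SSa _ _ _ (_ : 1 + 1 * 1 = 2)%N) // SS_inter mulrA.
have eGn : SS q 1 (1 + 2 * i) (1 + 2 * (b + c)) * (O * Ri) = (q - 1) * (Rb * X * V) * (W * Y).
  by rewrite -eP2i -eRk -eRm -eSm -ePn (SS_split q 1 1 (2 * i)) mul1n mulrC.
have ePN : SS q 1 1 (1 + 2 * (b + c)) = (q - 1) * (Rb * U) * W.
  by rewrite SS_split SS1 (SSa _ _ _ (_ : 1 + 1 * 1 = 2)%N) // SS_inter mulrA /Rb /U -SS_split.
have egb : gb q k i * Ri * Rb = Rb * X.
  by rewrite -eRk -(gbR q (_ : i <= k)%N) // (_ : k - i = b)%N //; lia.
have epp : pp q (q ^+ m.*2.+1) i = q ^+ (i * (i - 1)) * Y.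
  rewrite (_ : m.*2.+1 = 2 * i + (2 * (b + c) + 1))%N; last by lia.
  by rewrite pp_eq /Y; congr (_ * SS _ _ _ _); lia.
have nz := SS_neq0 hq.
have hO : O != 0 by apply: nz.
have hRi : Ri != 0 by apply: nz.
have hRb : Rb != 0 by apply: nz.
have hRc : Rc != 0 by apply: nz.
have hU : U != 0 by apply: nz; lia.
have hW : W != 0 by apply: nz.
have hq1 : q - 1 != 0 by rewrite subr_eq0; have := hq 1%N isT; rewrite expr1.
have eGn' : SS q 1 (1 + 2 * i) (1 + 2 * (b + c)) = (q - 1) * (Rb * X * V) * (W * Y) / (O * Ri).
  by rewrite -eGn mulfK // mulf_neq0.
have egb' : gb q k i = Rb * X / (Ri * Rb).
  by rewrite -egb -(mulrA (gb q k i)) mulfK // mulf_neq0.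
rewrite eGn' ePN egb' epp.
field.
by rewrite hq1 hRc hRb hRi hO hU hW.
Qed.

Lemma zprod_zero (F : fieldType) (q : F) m k i :
  (k < i)%N -> (i <= m)%N ->
  zprod (k%:Z - i%:Z + 1) (m%:Z - i%:Z)
     (fun j : int => (q ^ (2 * j) - 1) / (q ^ (2 * j - 2 * k%:Z + 2 * i%:Z) - 1)) = 0.
Proof.
move=> hki him.
rewrite /zprod ifT; last by lia.
have -> : (m%:Z - i%:Z - (k%:Z - i%:Z + 1) + 1)%R = (m - k)%N%:Z by lia.
have ht : (i - k - 1 < m - k)%N by lia.
rewrite (bigD1 (Ordinal ht)) //= .
have -> : (2 * (k%:Z - i%:Z + 1 + (i - k - 1)%N%:Z))%R = 0 by lia.
by rewrite expr0z subrr mul0r mul0r.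
Qed.

Theorem mainF (F : fieldType) (q : F) (hq : forall j, (0 < j)%N -> q ^+ j != 1) (n k : nat) :
  odd n -> (1 <= k)%N -> (k.*2 + 3 <= n)%N ->
  \sum_(1 <= i < ((n - 1)./2).+1)
     eHD q i * gHD q (n - i.*2) n *
     zprod (k%:Z - i%:Z + 1) (((n - 1)./2)%:Z - i%:Z)
       (fun j : int => (q ^ (2 * j) - 1) / (q ^ (2 * j - 2 * k%:Z + 2 * i%:Z) - 1))
  = (q ^+ (n * k) - 1) / (q - 1) *
    \prod_(k.+1 <= j < ((n - 1)./2).+1) ((q ^+ (2 * j) - 1) / (q ^+ (2 * j - 2 * k) - 1)).
Proof.
move=> hodd hk hkn.
have [m hm] : exists m, n = m.*2.+1.
  by exists n./2; rewrite -[n in n = _]odd_double_half hodd add1n.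
subst n.
rewrite (_ : ((m.*2.+1 - 1)./2 = m)%N); last by rewrite subn1 /= doubleK.
have hkm : (k < m)%N by lia.
rewrite (@big_cat_nat _ _ _ k.+1) //=; last by lia.
rewrite [X in _ + X = _]big_nat_cond [X in _ + X = _]big1 ?addr0; last first.
  by move=> i /andP[/andP[h1 h2] _]; rewrite zprod_zero // mulr0.
under eq_big_nat => i /andP[h1 h2] do rewrite (term_eq hq h1 h2 hkm).
rewrite -mulr_sumr.
have := newton q (q ^+ m.*2.+1) k.
rewrite -(big_mkord xpredT (fun i => gb q k i * pp q (q ^+ m.*2.+1) i)) big_ltn // gb0 pp0 mul1r => hN.
have -> : \sum_(1 <= i < k.+1) gb q k i * pp q (q ^+ m.*2.+1) i = (q ^+ m.*2.+1) ^+ k - 1.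
  by rewrite -hN [1 + _]addrC addrK.
have eR : \prod_(k.+1 <= j < m.+1) ((q ^+ (2 * j) - 1) / (q ^+ (2 * j - 2 * k) - 1))
   = SS q 2 (2 + 2 * k) (m - k) / SS q 2 2 (m - k).
  rewrite (big_addn 0 _ k.+1) big_mkord subSS prodf_div /SS.
  congr (_ / _); apply: eq_bigr => t _; congr (_ ^+ _ - _); lia.
rewrite eR exprM.
have hq1 : q - 1 != 0 by rewrite subr_eq0; have := hq 1%N isT; rewrite expr1.
have h2 : SS q 2 2 (m - k) != 0 by apply: SS_neq0.
field.
by rewrite hq1 h2.
Qed.

Lemma qv_ok : forall j, (0 < j)%N -> qv ^+ j != 1.
Proof.
move=> j hj; rewrite /qv -rmorphXn -(rmorph1 (@tofrac _)) tofrac_eq.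
apply/negP => /eqP h; have := congr1 (fun p : {poly rat} => size p) h; rewrite /=; rewrite size_polyXn size_poly1; lia.
Qed.

Unset Implicit Arguments.

Theorem proposition7p11 (n k : nat) :
  odd n -> (1 <= k)%N -> (k.*2 + 3 <= n)%N ->
  let q := qv in
  \sum_(1 <= i < ((n - 1)./2).+1)
     eHD q i * gHD q (n - i.*2) n *
     zprod (k%:Z - i%:Z + 1) (((n - 1)./2)%:Z - i%:Z)
       (fun j : int => (q ^ (2 * j) - 1) / (q ^ (2 * j - 2 * k%:Z + 2 * i%:Z) - 1))
  = (q ^+ (n * k) - 1) / (q - 1) *
    \prod_(k.+1 <= j < ((n - 1)./2).+1) ((q ^+ (2 * j) - 1) / (q ^+ (2 * j - 2 * k) - 1)).
Proof.
move=> ho hk hkn q; exact: (mainF qv_ok ho hk hkn).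
Qed.
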